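(* Let $X$ be a compact metric space and $f\colon X\to X$ continuous with $h_{\mathrm{top}}(f)<\infty$. Given $\eta,\phi\in C(X)$ and $Z\subset X$, suppose there exist $\alpha,\beta\in\mathbb{R}$ such that $$\alpha\le\liminf_{n\to\infty}\frac1nS_n\phi(x)\le\limsup_{n\to\infty}\frac1nS_n\phi(x)\le\beta$$ for every $x\in Z$. Then $P_Z(\eta)+\alpha t\le P_Z(\eta+t\phi)\le P_Z(\eta)+\beta t$ for all $t>0$.
   Context: $S_n\phi=\sum_{k=0}^{n-1}\phi\circ f^k$; $B(x,n,\delta)=\{y\mid d(f^kx,f^ky)<\delta,\ 0\le k\le n\}$. Pressure on a set $Z\subset X$: let $\mathcal{P}(Z,N,\delta)$ be the collection of countable sets $\{(x_i,n_i)\}\subset Z\times\{N,N+1,\dots\}$ with $Z\subset\bigcup_iB(x_i,n_i,\delta)$; $m_P(Z,s,\phi,\delta)=\lim_{N\to\infty}\inf_{\mathcal{P}(Z,N,\delta)}\sum_i\exp(-n_is+S_{n_i}\phi(x_i))$; $P_Z(\phi,\delta)=\inf\{s\mid m_P(Z,s,\phi,\delta)=0\}$; $P_Z(\phi)=\lim_{\delta\to0}P_Z(\phi,\delta)$; $P_\emptyset=-\infty$. *)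

(* Defs.v *)
From HB Require Import structures.
From mathcomp Require Import all_boot all_order all_algebra.
From mathcomp Require Import all_classical all_reals all_analysis.
Set Implicit Arguments. Unset Strict Implicit. Unset Printing Implicit Defensive.
Import Order.TTheory GRing.Theory Num.Theory.
Import numFieldNormedType.Exports.
Local Open Scope classical_set_scope.
Local Open Scope ring_scope.

Section Pressure.
Context {R : realType} {X : metricType R}.

Definition Sn (f : X -> X) (phi : X -> R) (n : nat) (x : X) : R :=
  \sum_(0 <= k < n) phi (iter k f x).

Definition bowen_ball (f : X -> X) (x : X) (n : nat) (delta : R) : set X :=
  [set y | forall k, (k <= n)%N -> mdist (iter k f x) (iter k f y) < delta].

Definition cover_family (f : X -> X) (Z : set X) (N : nat) (delta : R)
    (C : set (X * nat)) : Prop :=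
  [/\ countable C,
      C `<=` [set p | Z p.1 /\ (N <= p.2)%N] &
      Z `<=` \bigcup_(p in C) bowen_ball f p.1 p.2 delta].

Definition mP (f : X -> X) (Z : set X) (s : R) (phi : X -> R) (delta : R)
    : \bar R :=
  limn (fun N : nat => ereal_inf
    [set \esum_(p in C) (expR (- (p.2%:R * s) + Sn f phi p.2 p.1))%:E
       | C in [set C | cover_family f Z N delta C]]).

Definition PZdelta (f : X -> X) (Z : set X) (phi : X -> R) (delta : R)
    : \bar R :=
  ereal_inf [set s%:E | s in [set s : R | mP f Z s phi delta = 0%E]].

Definition PZ (f : X -> X) (Z : set X) (phi : X -> R) : \bar R :=
  if pselect (Z = set0) then -oo%E
  else lim (PZdelta f Z phi delta @[delta --> 0^'+]).

Definition separated (f : X -> X) (n : nat) (delta : R) (E : seq X) : Prop :=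
  uniq E /\ forall x y, x \in E -> y \in E -> x != y ->
    exists k, (k < n)%N /\ delta <= mdist (iter k f x) (iter k f y).

Definition sep_num (f : X -> X) (n : nat) (delta : R) : R :=
  sup [set (size E)%:R | E in [set E | separated f n delta E]].

Definition htop (f : X -> X) : \bar R :=
  lim (limn_esup (fun n : nat => ((n%:R)^-1 * ln (sep_num f n delta))%:E)
        @[delta --> 0^'+]).

End Pressure.

(* Main.v *)
Require Import Defs.
From HB Require Import structures.
From mathcomp Require Import all_boot all_order all_algebra.
From mathcomp Require Import all_classical all_reals all_analysis.
From mathcomp Require Import ring lra.
Import Order.TTheory GRing.Theory Num.Theory.
Import numFieldNormedType.Exports.
Local Open Scope classical_set_scope.
Local Open Scope ring_scope.
Set Implicit Arguments. Unset Strict Implicit. Unset Printing Implicit Defensive.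

Section S.
Context {R : realType} {X : metricType R}.

Lemma unif_cont (g : X -> R) : compact [set: X] -> continuous g ->
  forall e : R, 0 < e -> exists2 d : R, 0 < d &
    forall a b, mdist a b < d -> `|g a - g b| < e.
Proof.
move=> cX cg e e0.
have H : forall x, [set: X] x -> \forall x' \near x & i \near 0^'+,
  (forall b, mdist x' b < i -> `|g x' - g b| < e).
  move=> x _.
  have := cg x; move/cvgrPdist_lt => /(_ (e/2)) /=.
  rewrite divr_gt0 // => /(_ isT) /nbhs_ballP [r r0 rP].
  exists (ball x (r/2), [set d | 0 < d < r/2]); first split.
      by apply: nbhsx_ballx; rewrite divr_gt0.
    near=> d; apply/andP; split; near: d; [exact: nbhs_right_gt|].
    by apply: nbhs_right_lt; rewrite divr_gt0.
  move=> [x' d] [/= + /andP[d0 dr]] b.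
  rewrite ballEmdist /= => xx' x'b.
  have h1 := rP x'; have h2 := rP b.
  rewrite !ballEmdist /= in h1 h2.
  have hr : r / 2 < r by rewrite ltr_pdivrMr // ltr_pMr // ltr1n.
  have hx' := h1 (lt_trans xx' hr).
  have hb : `|g x - g b| < e / 2.
    apply: h2; apply: (le_lt_trans (metric_triangle x x' b)).
    by rewrite [r]splitr ltrD // (lt_trans x'b dr).
  rewrite (_ : g x' - g b = (g x - g b) - (g x - g x')); last by ring.
  apply: (le_lt_trans (ler_normB _ _)).
  by rewrite [e]splitr ltrD.
have := (compact_near_coveringP [set: X]).1 cX R (0^'+)
  (fun d x' => forall b, mdist x' b < d -> `|g x' - g b| < e).
move=> /(_ _ H) Hn.
near (0:R)^'+ => d.
exists d; first by near: d; exact: nbhs_right_gt.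
move=> a b; have := near Hn d; apply => //.
Unshelve. all: end_near.
Qed.

Variable f : X -> X.

Definition wt (g : X -> R) (s : R) (p : X * nat) : \bar R :=
  (expR (- (p.2%:R * s) + Sn f g p.2 p.1))%:E.

Definition Iinf Z s g delta (N : nat) : \bar R := ereal_inf
    [set \esum_(p in C) (expR (- (p.2%:R * s) + Sn f g p.2 p.1))%:E
       | C in [set C | cover_family f Z N delta C]].

Lemma Iinf_ge0 Z s g delta N : (0 <= Iinf Z s g delta N)%E.
Proof.
apply: le_ereal_inf_tmp => _ [C _ <-]; apply: esum_ge0 => p _.
by rewrite lee_fin expR_ge0.
Qed.

Lemma Iinf_nd Z s g delta : nondecreasing_seq (Iinf Z s g delta).
Proof.
move=> N N' NN'; apply: ereal_inf_le_tmp => _ [C [cC sC zC] <-].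
exists C => //; split => // p /sC [? ?]; split => //; exact: leq_trans NN' _.
Qed.

Lemma mP_zeroP Z s g delta : mP f Z s g delta = 0%E <->
  (forall N (e : R), 0 < e -> exists C, cover_family f Z N delta C /\
     (\esum_(p in C) wt g s p <= e%:E)%E).
Proof.
have -> : mP f Z s g delta = ereal_sup (range (Iinf Z s g delta)).
  by apply: cvg_lim => //; apply: ereal_nondecreasing_cvgn; exact: Iinf_nd.
split.
- move=> H N e e0.
  have : (Iinf Z s g delta N < e%:E)%E.
    apply: (le_lt_trans _ (_ : 0 < e%:E)%E); last by rewrite lte_fin.
    by rewrite -H; apply: ereal_sup_ubound; exists N.
  move=> /ereal_inf_lt [_ [C cC <-] lt]; exists C; split => //.
  exact: ltW.
- move=> H; apply/eqP; rewrite eq_le; apply/andP; split; last first.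
    by apply: le_ereal_sup_tmp; exists (Iinf Z s g delta 0); [exists 0%N|exact: Iinf_ge0].
  apply: ge_ereal_sup => _ [N _ <-].
  apply/lee_addgt0Pr => e e0; rewrite add0e.
  have [C [cC le]] := H N e e0.
  by apply: ge_ereal_inf; exists (\esum_(p in C) wt g s p) => //; exists C.
Qed.


Lemma esum_subset (T : choiceType) (A B : set T) (a : T -> \bar R) :
  A `<=` B -> (forall x, (0 <= a x)%E) ->
  (\esum_(i in A) a i <= \esum_(i in B) a i)%E.
Proof.
move=> AB a0; rewrite esum_mkcond [X in (_ <= X)%E]esum_mkcond.
apply: le_esum => i _; case: ifPn => iA; last by case: ifPn.
by rewrite ifT // inE; apply: AB; rewrite -inE.
Qed.

Lemma esum_bigcup_le (T : choiceType) (J : nat -> set T) (a : T -> \bar R) :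
  (forall x, (0 <= a x)%E) ->
  (\esum_(i in \bigcup_k J k) a i <= \esum_(k in [set: nat]) \esum_(j in J k) a j)%E.
Proof.
move=> a0; rewrite seqDU_bigcup_eq esum_bigcupT //.

apply: le_esum => k _; apply: esum_subset => //; exact: subset_seqDU.
Qed.

Lemma geom_sum (e : R) n :
  \sum_(0 <= i < n) e / 2 ^+ i.+1 = e - e / 2 ^+ n.
Proof.
elim: n => [|n IH]; first by rewrite big_geq // expr0 divr1 subrr.
rewrite big_nat_recr //= IH exprS.
have h : (2:R) ^+ n != 0 by rewrite expf_neq0.
by field.
Qed.

Lemma geom_series (e : R) : 0 < e ->
  (\sum_(i <oo) (e / 2 ^+ i.+1)%:E <= e%:E)%E.
Proof.
move=> e0; apply: lime_le.
  by apply: is_cvg_nneseries => i _; rewrite lee_fin divr_ge0 // ?ltW // exprn_ge0.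
apply: nearW => n; rewrite sumEFin lee_fin geom_sum lerBlDr lerDl.
by rewrite divr_ge0 ?ltW // exprn_ge0.
Qed.

Lemma Sn_add (g h : X -> R) (t : R) n x :
  Sn f (fun y => g y + t * h y) n x = Sn f g n x + t * Sn f h n x.
Proof. by rewrite /Sn big_split /= mulr_sumr. Qed.


Lemma keyC Z (eta phi : X -> R) (beta t gam eps s1 delta : R) :
  0 < t ->
  (forall x, Z x -> exists M, forall n, (M <= n)%N ->
      Sn f phi n x <= n%:R * (beta + eps)) ->
  (forall a b, mdist a b < delta -> phi a <= phi b + gam) ->
  mP f Z s1 eta delta = 0%E ->
  mP f Z (s1 + t * (beta + eps + gam)) (fun x => eta x + t * phi x) delta = 0%E.
Proof.
move=> t0 HB Hu /mP_zeroP H0; apply/mP_zeroP => N e e0.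
pose ZM M := [set x | Z x /\ forall n, (M <= n)%N ->
      Sn f phi n x <= n%:R * (beta + eps)].
have : forall M : nat, exists C, cover_family f Z (maxn N M) delta C /\
    (\esum_(p in C) wt eta s1 p <= (e / 2 ^+ M.+1)%:E)%E.
  by move=> M; apply: H0; rewrite divr_gt0 // exprn_gt0.
move=> /choice [CC HCC].
pose G M := [set p | CC M p /\ exists y, ZM M y /\ bowen_ball f p.1 p.2 delta y].
exists (\bigcup_(M in setT) G M); split.
  split.
  - apply: bigcup_countable => // M _.
    have [[cC _ _] _] := HCC M.
    by apply: sub_countable cC; apply: subset_card_le => p [].
  - move=> p [M _ [CMp _]]; have [[_ sub _] _] := HCC M.
    have [zp le] := sub p CMp; split => //; exact: leq_trans (leq_maxl _ _) le.
  - move=> x zx; have [M HM] := HB x zx.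
    have [[_ _ cov] _] := HCC M.
    have [p CMp bx] := cov x zx.
    exists p => //; exists M => //; split => //; exists x; split => //.
apply: (le_trans (y := (\esum_(p in \bigcup_(M in setT) G M) wt eta s1 p)%E)).
  apply: le_esum => -[x n] [M _ [CMp [y [[zy hy] bxy]]]] /=.
  rewrite /wt /= lee_fin ler_expR Sn_add.
  have [[_ sub _] _] := HCC M.
  have [_ le] := sub _ CMp; rewrite /= in le.
  have Mn : (M <= n)%N by apply: leq_trans (leq_maxr _ _) le.
  have A : Sn f phi n x <= Sn f phi n y + n%:R * gam.
    rewrite /Sn; apply: (le_trans (y := \sum_(0 <= k < n) (phi (iter k f y) + gam))).
      apply: ler_sum_nat => k /andP[_ kn]; apply: Hu; apply: bxy; exact: ltnW.
    by rewrite big_split sumr_const_nat subn0 mulr_natl.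
  have B := hy n Mn.
  have C : Sn f phi n x <= n%:R * (beta + eps + gam) by lra.
  have := ler_wpM2l (ltW t0) C; lra.
apply: (le_trans (esum_bigcup_le _ _)).
  by move=> p; rewrite lee_fin expR_ge0.
apply: (le_trans (y := (\esum_(M in [set: nat]) (e / 2 ^+ M.+1)%:E)%E)).
  apply: le_esum => M _; apply: (le_trans _ (HCC M).2).
  by apply: esum_subset => [p []|p]; rewrite // lee_fin expR_ge0.
rewrite -nneseries_esumT; first exact: geom_series.
by move=> n; rewrite lee_fin divr_ge0 // ?ltW // exprn_ge0.
Qed.


Lemma G1 (A B : \bar R) (c : R) :
  (forall r : R, (B < r%:E)%E -> (A <= (r + c)%:E)%E) -> (A <= B + c%:E)%E.
Proof.
move=> H; case: B H => [b| |] H.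
- apply/lee_addgt0Pr => e e0.
  apply: (le_trans (H (b + e) _)); first by rewrite lte_fin ltrDl.
  by rewrite -!EFinD lee_fin; lra.
- by rewrite leey.
- case: A H => [a| |] H //.
  + have h := H (a - c - 1)%R (ltNyr _); rewrite lee_fin in h; exfalso; lra.
  + by have := H 0%R (ltNyr _).
Qed.

Lemma keyD Z (eta phi : X -> R) (beta t gam delta : R) :
  0 < t ->
  (forall eps, 0 < eps -> forall x, Z x -> exists M, forall n, (M <= n)%N ->
      Sn f phi n x <= n%:R * (beta + eps)) ->
  (forall a b, mdist a b < delta -> phi a <= phi b + gam) ->
  (PZdelta f Z (fun x => (eta x + t * phi x)%R) delta <=
     PZdelta f Z eta delta + (t * (beta + gam))%:E)%E.
Proof.
move=> t0 HB Hu; apply/lee_addgt0Pr => e e0.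
have -> : (PZdelta f Z eta delta + (t * (beta + gam))%:E + e%:E =
   PZdelta f Z eta delta + (t * (beta + e / t + gam))%:E)%E.
  rewrite -addeA -EFinD; congr (_ + _%:E)%E; by field; rewrite gt_eqF.
apply: G1 => r /ereal_inf_lt [_ [s1 hs1 <-]]; rewrite lte_fin => s1r.
apply: (le_trans (y := (s1 + t * (beta + e / t + gam))%:E)).
  apply: ereal_inf_lbound; exists (s1 + t * (beta + e / t + gam)) => //.
  apply: keyC => //; first by apply: HB; rewrite divr_gt0.
by rewrite lee_fin lerD2r ltW.
Qed.


Lemma HB_of_limsup (psi : X -> R) (b : R) x :
  (limn_esup (fun n : nat => ((n%:R)^-1 * Sn f psi n x)%:E) <= b%:E)%E ->
  forall eps, 0 < eps -> exists M, forall n, (M <= n)%N ->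
      Sn f psi n x <= n%:R * (b + eps).
Proof.
set u := (fun n : nat => _); move=> H eps e0.
have E : limn (esups u) = ereal_inf (range (esups u)).
  by apply/cvg_lim => //; exact: cvg_esups_inf.
rewrite limn_esup_lim E in H.
have : (ereal_inf (range (esups u)) < (b + eps)%:E)%E.
  by apply: (le_lt_trans H); rewrite lte_fin ltrDl.
move=> /ereal_inf_lt [_ [M _ <-]] hM.
exists M.+1 => n Mn.
have : (u n <= esups u M)%E.
  by apply: ereal_sup_ubound; exists n => //=; exact: ltnW.
move=> /le_lt_trans /(_ hM); rewrite /u lte_fin.
have n0 : (0 < n%:R :> R) by rewrite ltr0n; exact: leq_trans Mn.
by rewrite mulrC ltr_pdivrMr // mulrC => /ltW.
Qed.


Lemma PZdelta_mono Z g (d d' : R) : d' <= d ->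
  (PZdelta f Z g d <= PZdelta f Z g d')%E.
Proof.
move=> dd; apply: ereal_inf_le_tmp => _ [s hs <-]; exists s => //.
move/mP_zeroP: hs => hs; apply/mP_zeroP => N e e0.
have [C [[cC sC zC] le]] := hs N e e0; exists C; split => //; split => //.
move=> x /zC [p Cp bp]; exists p => //= k kn.
exact: lt_le_trans (bp k kn) dd.
Qed.

Lemma PZ_sup Z g : ~ Z = set0 ->
  PZ f Z g = ereal_sup ((PZdelta f Z g) @` [set` `]0%R, +oo[]).
Proof.
move=> Z0; rewrite /PZ; case: pselect => // Zn.
apply/cvg_lim => //.
apply: (@nonincreasing_at_right_cvge _ _ 0 (BInfty _ false)) => //.
by move=> a b ha hb ab; exact: PZdelta_mono.
Qed.


Lemma upper Z (eta phi : X -> R) (beta t : R) :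
  compact [set: X] -> continuous phi -> 0 < t ->
  (forall x, Z x ->
     (limn_esup (fun n : nat => ((n%:R)^-1 * Sn f phi n x)%:E) <= beta%:E)%E) ->
  (PZ f Z (fun x => (eta x + t * phi x)%R) <= PZ f Z eta + (beta * t)%:E)%E.
Proof.
move=> cX cphi t0 Hsup.
have [->|Z0] := pselect (Z = set0).
  by rewrite /PZ; case: pselect => // _; rewrite leNye.
rewrite !PZ_sup //.
apply: ge_ereal_sup => _ [d /= d0 <-].
rewrite in_itv /= andbT in d0.
apply/lee_addgt0Pr => e e0.
have [d1 d10 Hd1] := unif_cont cX cphi (divr_gt0 e0 t0).
pose d2 := Num.min d d1.
have d20 : 0 < d2 by rewrite lt_min d0 d10.
have d2d : d2 <= d by rewrite /d2 ge_min lexx.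
have d2d1 : d2 <= d1 by rewrite /d2 ge_min lexx orbT.
apply: (le_trans (PZdelta_mono Z _ d2d)).
apply: (le_trans (@keyD Z eta phi beta t (e / t) d2 t0 _ _)).
- by move=> eps eps0 x zx; exact: HB_of_limsup (Hsup x zx) eps eps0.
- move=> a b ab; have := Hd1 a b (lt_le_trans ab d2d1).
  move=> /ltW h; have := ler_norm (phi a - phi b); lra.
- have -> : (t * (beta + e / t))%:E = ((beta * t)%:E + e%:E)%E.
    by rewrite -EFinD; congr (_%:E); field; rewrite gt_eqF.
  rewrite addeA; apply: leeD2r; apply: leeD2r.
  apply: ereal_sup_ubound; exists d2 => //=.
  by rewrite in_itv /= andbT.
Qed.

End S.

Theorem lemma4p8 (R : realType) (X : metricType R) (f : X -> X)
    (eta phi : X -> R) (Z : set X) (alpha beta : R) :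
  compact [set: X] -> continuous f -> (htop f < +oo)%E ->
  continuous eta -> continuous phi ->
  (forall x, Z x ->
     [/\ (alpha%:E <= limn_einf (fun n : nat => ((n%:R)^-1 * Sn f phi n x)%:E))%E,
         (limn_einf (fun n : nat => ((n%:R)^-1 * Sn f phi n x)%:E)
            <= limn_esup (fun n : nat => ((n%:R)^-1 * Sn f phi n x)%:E))%E &
         (limn_esup (fun n : nat => ((n%:R)^-1 * Sn f phi n x)%:E) <= beta%:E)%E]) ->
  forall t : R, 0 < t ->
    (PZ f Z eta + (alpha * t)%:E <= PZ f Z (fun x => (eta x + t * phi x)%R))%E /\
    (PZ f Z (fun x => (eta x + t * phi x)%R) <= PZ f Z eta + (beta * t)%:E)%E.
Proof.
move=> cX cf hf ceta cphi H t t0; split; last first.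
  by apply: upper => // x zx; case: (H x zx).
have cN : continuous (fun y => - phi y).
  by move=> x; apply: cvgN; exact: cphi.
have U := @upper R X f Z (fun x => (eta x + t * phi x)%R) (fun y => - phi y)
  (- alpha) t cX cN t0.
have E : (fun x => (eta x + t * phi x) + t * - phi x) = eta.
  by apply: boolp.funext => x; ring.
rewrite E in U.
have {}U : (PZ f Z eta <= PZ f Z (fun x => (eta x + t * phi x)%R) - (alpha * t)%:E)%E.
  rewrite -EFinN -mulNr; apply: U => x zx.
  have [ha _ _] := H x zx.
  rewrite (_ : (fun n : nat => _) =
     (\- (fun n : nat => ((n%:R)^-1 * Sn f phi n x)%:E))%E); last first.
    apply: boolp.funext => n /=; rewrite /Sn sumrN mulrN //.
  by rewrite EFinN -(oppeK (limn_esup _)) leeN2; exact: ha.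
by rewrite leeBrDr in U.
Qed.
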